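(* Let $H\in\mathbb{R}^{n\times d}$ have rank $h$, let $\Sigma\in\mathbb{R}^{n\times n}$ be symmetric positive definite, let $y\in\mathbb{R}^n$, $J\ge 2$, and let $v_0^{(1)},\dots,v_0^{(J)}\in\mathbb{R}^d$ be an initial ensemble. Run deterministic EKI: $$v_{i+1}^{(j)}=v_i^{(j)}+\Gamma_iH^\top(H\Gamma_iH^\top+\Sigma)^{-1}(y-Hv_i^{(j)}),\quad j=1,\dots,J,\ i\ge 0,$$ where $\Gamma_i$ is the empirical covariance of $v_i^{(1)},\dots,v_i^{(J)}$. Let $\theta_i^{(j)}=Hv_i^{(j)}-y$ and let $\mathcal{P},\mathcal{Q},\mathcal{N}$ be the projectors defined in the context. Then for every particle $j=1,\dots,J$: (a) $\|\mathcal{P}\theta_i^{(j)}\|=\mathcal{O}(i^{-1/2})$ as $i\to\infty$; (b) $\mathcal{Q}\theta_i^{(j)}=\mathcal{Q}\theta_0^{(j)}$ for all $i\ge 0$; (c) $\mathcal{N}\theta_i^{(j)}=\mathcal{N}\theta_0^{(j)}$ for all $i\ge 0$.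
   Context: Empirical covariance: $\Gamma_i=\frac{1}{J-1}\sum_{j=1}^J(v_i^{(j)}-\bar v_i)(v_i^{(j)}-\bar v_i)^\top$ with $\bar v_i=\frac1J\sum_j v_i^{(j)}$. Let $r$ be the number of positive eigenvalues of the generalized eigenvalue problem $H\Gamma_0H^\top w=\delta\,\Sigma w$. Let $w_1,\dots,w_n\in\mathbb{R}^n$ be a basis of $\mathbb{R}^n$ with $w_k^\top\Sigma w_l=1$ if $k=l$ and $0$ otherwise, such that: each $w_\ell$ is a generalized eigenvector of the pencil $(H\Gamma_iH^\top,\Sigma)$ for every $i\ge0$; $w_1,\dots,w_r\in\mathsf{Ran}(\Sigma^{-1}H)$ correspond to positive eigenvalues; $w_{r+1},\dots,w_h\in\mathsf{Ran}(\Sigma^{-1}H)$ correspond to the eigenvalue zero; $w_{h+1},\dots,w_n$ form a basis of $\mathsf{Ker}(H^\top)$; and $\mathsf{span}(w_1,\dots,w_h)=\mathsf{Ran}(\Sigma^{-1}H)$. With $W=[w_1,\dots,w_n]$ and $W_{k:l}$ its columns $k$ through $l$, define $\mathcal{P}=\Sigma W_{1:r}W_{1:r}^\top$, $\mathcal{Q}=\Sigma W_{r+1:h}W_{r+1:h}^\top$, $\mathcal{N}=\Sigma W_{h+1:n}W_{h+1:n}^\top$. *)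

(* Defs.v *)
From HB Require Import structures.
From mathcomp Require Import all_boot all_order all_algebra.
From mathcomp Require Import reals.
Set Implicit Arguments. Unset Strict Implicit. Unset Printing Implicit Defensive.
Import Order.TTheory GRing.Theory Num.Theory.
Local Open Scope ring_scope.

Section EKI.
Variable R : realType.

Definition emp_mean (d J : nat) (v : 'I_J -> 'cV[R]_d) : 'cV[R]_d :=
  (J%:R)^-1 *: \sum_(j < J) v j.

Definition emp_cov (d J : nat) (v : 'I_J -> 'cV[R]_d) : 'M[R]_d :=
  ((J.-1)%:R)^-1 *: \sum_(j < J) ((v j - emp_mean v) *m (v j - emp_mean v)^T).

Definition eki_step (n d J : nat) (H : 'M[R]_(n, d)) (Sigma : 'M[R]_n)
  (y : 'cV[R]_n) (v : 'I_J -> 'cV[R]_d) : 'I_J -> 'cV[R]_d :=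
  fun j => v j + emp_cov v *m H^T *m invmx (H *m emp_cov v *m H^T + Sigma)
                   *m (y - H *m v j).

Definition eki (n d J : nat) (H : 'M[R]_(n, d)) (Sigma : 'M[R]_n)
  (y : 'cV[R]_n) (v0 : 'I_J -> 'cV[R]_d) (i : nat) : 'I_J -> 'cV[R]_d :=
  iter i (eki_step H Sigma y) v0.

(* keep only the columns of W whose index satisfies P (others set to 0);
   mask_cols W P *m (mask_cols W P)^T = W_{cols in P} W_{cols in P}^T *)
Definition mask_cols (m k : nat) (W : 'M[R]_(m, k)) (P : pred 'I_k) : 'M[R]_(m, k) :=
  \matrix_(a, b) (if P b then W a b else 0).

Definition spd (n : nat) (S : 'M[R]_n) : Prop :=
  S^T = S /\ forall x : 'cV[R]_n, x != 0 -> 0 < (x^T *m S *m x) 0 0.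

Definition norm2 (n : nat) (x : 'cV[R]_n) : R := Num.sqrt (\sum_(a < n) x a 0 ^+ 2).

End EKI.

(* Main.v *)
Require Import Defs.
From HB Require Import structures.
From mathcomp Require Import all_boot all_order all_algebra.
From mathcomp Require Import reals.
From mathcomp Require Import ring lra.
Import Order.TTheory GRing.Theory Num.Theory.
Set Implicit Arguments. Unset Strict Implicit.
Local Open Scope ring_scope.

Section Aux.
Variable R : realType.

Definition var (J : nat) (f : 'I_J -> R) :=
  (J.-1)%:R^-1 * \sum_(j < J) (f j - J%:R^-1 * \sum_(l < J) f l) ^+ 2.

Lemma var_ge0 J (f : 'I_J -> R) : 0 <= var f.
Proof.
rewrite /var mulr_ge0 ?invr_ge0 ?ler0n //.
by apply: sumr_ge0 => j _; apply: sqr_ge0.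
Qed.

Lemma varD J (f : 'I_J -> R) c : var (fun j => f j + c) = var f.
Proof.
rewrite /var; congr (_ * _).
case: J f => [|J] f; first by rewrite !big_ord0.
apply: eq_bigr => j _; congr (_ ^+ 2).
rewrite big_split /= sumr_const card_ord -[c *+ _]mulr_natr mulrDr.
have hJ : (J.+1)%:R^-1 * (c * J.+1%:R) = c :> R.
  by rewrite mulrC -mulrA mulfV ?mulr1 // pnatr_eq0.
rewrite hJ; ring.
Qed.

Lemma eq_var J (f g : 'I_J -> R) : f =1 g -> var f = var g.
Proof.
move=> e; rewrite /var; congr (_ * _); apply: eq_bigr => j _.
by rewrite e (eq_bigr _ (fun l _ => e l)).
Qed.

Lemma varM J (f : 'I_J -> R) s : var (fun j => f j * s) = s ^+ 2 * var f.
Proof.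
rewrite /var mulrA [_ ^+ 2 * _]mulrC -mulrA; congr (_ * _).
under eq_bigr do rewrite -mulr_suml.
rewrite mulr_sumr; apply: eq_bigr => j _; ring.
Qed.

Lemma cov_quad d J (v : 'I_J -> 'cV[R]_d) (z : 'rV[R]_d) :
  (z *m emp_cov v *m z^T) 0 0 = var (fun j => (z *m v j) 0 0).
Proof.
rewrite /emp_cov -scalemxAr -scalemxAl mxE /var; congr (_ * _).
rewrite mulmx_sumr mulmx_suml summxE; apply: eq_bigr => j _.
rewrite !mulmxA -[_ *m z^T]mulmxA -trmx_mul.
have sq (x : 'M[R]_1) : (x *m x^T) 0 0 = x 0 0 ^+ 2.
  by rewrite mxE big_ord1 mxE expr2.
rewrite sq mulmxBr /emp_mean -scalemxAr mulmx_sumr !mxE summxE.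
by [].
Qed.

Lemma emp_cov_sym d J (v : 'I_J -> 'cV[R]_d) : (emp_cov v)^T = emp_cov v.
Proof.
rewrite /emp_cov linearZ /= linear_sum /=; congr (_ *: _).
by apply: eq_bigr => j _; rewrite trmx_mul trmxK.
Qed.

Section Mat.
Variables (n d J : nat) (H : 'M[R]_(n, d)) (Sigma : 'M[R]_n) (y : 'cV[R]_n).
Variable W : 'M[R]_n.

Definition Cm (v : 'I_J -> 'cV[R]_d) := H *m emp_cov v *m H^T.
Definition coord (k : 'I_n) (v : 'I_J -> 'cV[R]_d) (j : 'I_J) : R :=
  ((col k W)^T *m (H *m v j - y)) 0 0.

Lemma Cm_sym v : (Cm v)^T = Cm v.
Proof. by rewrite /Cm !trmx_mul trmxK emp_cov_sym mulmxA. Qed.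

Lemma wSw : W^T *m Sigma *m W = 1%:M -> forall k,
  ((col k W)^T *m Sigma *m col k W) 0 0 = 1.
Proof.
move=> hW k; rewrite tr_col -row_mul.
have -> : (row k (W^T *m Sigma) *m col k W) 0 0 = (W^T *m Sigma *m W) k k.
  by rewrite !mxE; apply: eq_bigr => l _; rewrite !mxE.
by rewrite hW mxE eqxx.
Qed.

Lemma eig_var v k dl : W^T *m Sigma *m W = 1%:M ->
  Cm v *m col k W = dl *: (Sigma *m col k W) -> dl = var (coord k v).
Proof.
move=> hW he.
have e1 : ((col k W)^T *m Cm v *m col k W) 0 0 = dl.
  by rewrite -mulmxA he -scalemxAr mxE mulmxA wSw // mulr1.
rewrite -e1 /Cm !mulmxA -mulmxA.
have -> : H^T *m col k W = ((col k W)^T *m H)^T by rewrite trmx_mul trmxK.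
rewrite cov_quad -(varD (coord k v) (((col k W)^T *m y) 0 0)).
apply: eq_var => j.
by rewrite /coord mulmxBr mulmxA !mxE; ring.
Qed.

Lemma Cm_psd v (u : 'rV[R]_n) : 0 <= (u *m Cm v *m u^T) 0 0.
Proof.
rewrite /Cm !mulmxA -mulmxA.
have -> : H^T *m u^T = (u *m H)^T by rewrite trmx_mul.
by rewrite cov_quad var_ge0.
Qed.

Lemma M_unit v : spd Sigma -> (Cm v + Sigma) \in unitmx.
Proof.
move=> [_ hpd].
rewrite -row_free_unit -kermx_eq0; apply/eqP/row_matrixP => i.
rewrite row0.
set u := row i _.
have hu : u *m (Cm v + Sigma) = 0 by rewrite /u -row_mul mulmx_ker row0.
case: (eqVneq u 0) => // hu0; exfalso.
have hp := hpd (u^T); rewrite trmx_eq0 trmxK in hp; have {hp} hp := hp hu0.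
have hc := Cm_psd v u.
have : (u *m (Cm v + Sigma) *m u^T) 0 0 = 0 by rewrite hu mul0mx mxE.
rewrite mulmxDr mulmxDl mxE => e.
by have := ltr_wpDl hc hp; rewrite e ltxx.
Qed.

Lemma key v k dl : spd Sigma -> W^T *m Sigma *m W = 1%:M ->
  Cm v *m col k W = dl *: (Sigma *m col k W) ->
  forall j, coord k (eki_step H Sigma y v) j = coord k v j / (1 + var (coord k v)).
Proof.
move=> hS hW he j.
have hdl := eig_var hW he; rewrite -hdl.
have hM := M_unit v hS.
set M := Cm v + Sigma in hM *.
set w := col k W in he *.
have hwC : w^T *m Cm v = dl *: (w^T *m Sigma).
  by rewrite -{1}Cm_sym -trmx_mul he linearZ /= trmx_mul hS.1.
have hdl0 : 0 <= dl by rewrite hdl var_ge0.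
have hdl1 : 1 + dl != 0 by rewrite gt_eqF // (lt_le_trans ltr01) // lerDl.
have hwM : w^T *m M = (1 + dl) *: (w^T *m Sigma).
  by rewrite mulmxDr hwC scalerDl scale1r addrC.
have e : w^T *m Sigma = (1 + dl)^-1 *: (w^T *m M).
  by rewrite hwM scalerA (mulVf hdl1) scale1r.
have hwCM : w^T *m Cm v *m invmx M = (dl / (1 + dl)) *: w^T.
  by rewrite hwC e !scalerA -!scalemxAl -mulmxA mulmxV // mulmx1 mulrC.
rewrite /coord /eki_step.
set th := H *m v j - y.
have -> : H *m (v j + emp_cov v *m H^T *m invmx M *m (y - H *m v j)) - y
          = th - Cm v *m (invmx M *m th).
  by rewrite mulmxDr !mulmxA -[y - _]opprB mulmxN /th addrAC.
rewrite -/w mulmxBr (mulmxA _ (Cm v)) (mulmxA (w^T *m Cm v)) hwCM -scalemxAl.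
set a := w^T *m th.
rewrite !mxE; field; exact: hdl1.
Qed.

End Mat.

Lemma seq_zero J (A : nat -> 'I_J -> R) :
  (forall i j, A i.+1 j = A i j / (1 + var (A i))) -> var (A 0%N) = 0 ->
  forall i j, A i j = A 0%N j.
Proof.
move=> hA h0; elim=> [//|i IH] j.
by rewrite hA (eq_var IH) h0 addr0 invr1 mulr1 IH.
Qed.

Lemma seq_pos J (A : nat -> 'I_J -> R) :
  (forall i j, A i.+1 j = A i j / (1 + var (A i))) -> 0 < var (A 0%N) ->
  forall i j, A i j ^+ 2 * i%:R <= A 0%N j ^+ 2 / (2 * var (A 0%N)).
Proof.
move=> hA h0.
set d0 := var (A 0%N) in h0 *.
have inv : forall i, [/\ 0 < var (A i), var (A i) * (2 * i%:R * d0 + 1) <= d0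
     & forall j, A i j ^+ 2 * d0 = A 0%N j ^+ 2 * var (A i)].
  elim=> [|i [p1 p2 p3]].
    split; [done | by rewrite mulr0 mul0r add0r mulr1 | by move=> j; rewrite mulrC].
  set dl := var (A i) in p1 p2 p3 *.
  have ht : 0 < 1 + dl by rewrite ltr_pwDr.
  have hv : var (A i.+1) = dl / (1 + dl) ^+ 2.
    by rewrite (eq_var (hA i)) varM exprVn mulrC.
  rewrite hv; split.
  - by rewrite divr_gt0 // exprn_gt0.
  - rewrite -[i.+1]addn1 natrD mulrAC ler_pdivrMr ?exprn_gt0 //.
    have hd0 : 0 < d0 by [].
    nra.
  - move=> j; rewrite hA -/dl.
    have -> : (A i j / (1 + dl)) ^+ 2 * d0 = (A i j ^+ 2 * d0) / (1 + dl) ^+ 2.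
      by rewrite expr_div_n mulrAC.
    by rewrite p3 [RHS]mulrA.
move=> i j; have [p1 p2 p3] := inv i.
set dl := var (A i) in p1 p2 p3 *.
have hi : 0 <= i%:R :> R by rewrite ler0n.
have h2 : 2 * i%:R * dl <= 1.
  have : 2 * i%:R * dl * d0 <= 1 * d0 by nra.
  by rewrite ler_pM2r.
rewrite ler_pdivlMr; last by rewrite mulr_gt0.
have ha : 0 <= A 0%N j ^+ 2 by apply: sqr_ge0.
have -> : A i j ^+ 2 * i%:R * (2 * d0) = 2 * i%:R * (A i j ^+ 2 * d0) by ring.
rewrite p3.
have := ler_wpM2l ha h2; rewrite mulr1 => h.
apply: le_trans h; rewrite le_eqVlt; apply/orP; left; apply/eqP; ring.
Qed.

Lemma mask_mul n (W : 'M[R]_n) (P : pred 'I_n) (x : 'cV[R]_n) :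
  (mask_cols W P)^T *m x = \col_k (if P k then ((col k W)^T *m x) 0 0 else 0).
Proof.
apply/matrixP => a b; rewrite !mxE ord1.
case hP: (P a).
  by apply: eq_bigr => c _; rewrite !mxE hP.
by rewrite big1 // => c _; rewrite !mxE hP mul0r.
Qed.

Lemma sq_le (x z : R) : `|x| <= z -> x ^+ 2 <= z ^+ 2.
Proof.
move=> h; rewrite -real_normK ?num_real // !expr2.
by apply: ler_pM => //; apply: normr_ge0.
Qed.

Lemma norm_bound n (M : 'M[R]_n) (u : 'cV[R]_n) B :
  (forall b, `|u b 0| <= B) ->
  norm2 (M *m u) <= `|B| * Num.sqrt (\sum_a (\sum_b `|M a b|) ^+ 2).
Proof.
move=> hu; rewrite /norm2 -sqrtr_sqr -sqrtrM ?sqr_ge0 // ler_sqrt; last first.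
  by rewrite mulr_ge0 ?sqr_ge0 // sumr_ge0 // => a _; rewrite sqr_ge0.
rewrite mulr_sumr; apply: ler_sum => a _.
rewrite -exprMn mulrC; apply: sq_le.
rewrite mxE mulr_suml; apply: le_trans (ler_norm_sum _ _ _) _.
apply: ler_sum => b _; rewrite normrM.
by apply: ler_wpM2l => //; apply: normr_ge0.
Qed.

End Aux.

Theorem theorem3p8 (R : realType) (n d J h r : nat)
  (H : 'M[R]_(n, d)) (Sigma : 'M[R]_n) (y : 'cV[R]_n)
  (v0 : 'I_J -> 'cV[R]_d) (W : 'M[R]_n) :
  \rank H = h ->
  spd Sigma ->
  (2 <= J)%N ->
  (r <= h)%N ->
  (* w_1..w_n form a basis of R^n, Sigma-orthonormal *)
  W \in unitmx ->
  W^T *m Sigma *m W = 1%:M ->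
  (* each w_l is a generalized eigenvector of (H Gamma_i H^T, Sigma) for all i *)
  (forall (i : nat) (k : 'I_n), exists delta : R,
      H *m emp_cov (eki H Sigma y v0 i) *m H^T *m col k W
      = delta *: (Sigma *m col k W)) ->
  (* w_1..w_r : in Ran(Sigma^-1 H), positive eigenvalues (for Gamma_0) *)
  (forall k : 'I_n, (k < r)%N ->
      ((col k W)^T <= (invmx Sigma *m H)^T)%MS /\
      exists2 delta : R, 0 < delta &
        H *m emp_cov v0 *m H^T *m col k W = delta *: (Sigma *m col k W)) ->
  (* w_{r+1}..w_h : in Ran(Sigma^-1 H), eigenvalue zero (for Gamma_0) *)
  (forall k : 'I_n, (r <= k)%N -> (k < h)%N ->
      ((col k W)^T <= (invmx Sigma *m H)^T)%MS /\
      H *m emp_cov v0 *m H^T *m col k W = 0) ->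
  (* w_{h+1}..w_n : a basis of Ker(H^T) *)
  ((mask_cols W (fun k : 'I_n => (h <= k)%N))^T == kermx H)%MS ->
  (* span(w_1..w_h) = Ran(Sigma^-1 H) *)
  ((mask_cols W (fun k : 'I_n => (k < h)%N))^T == (invmx Sigma *m H)^T)%MS ->
  let WP := mask_cols W (fun k : 'I_n => (k < r)%N) in
  let WQ := mask_cols W (fun k : 'I_n => (r <= k)%N && (k < h)%N) in
  let WN := mask_cols W (fun k : 'I_n => (h <= k)%N) in
  let P := Sigma *m WP *m WP^T in
  let Q := Sigma *m WQ *m WQ^T in
  let N := Sigma *m WN *m WN^T in
  let theta := fun (i : nat) (j : 'I_J) => H *m eki H Sigma y v0 i j - y in
  forall j : 'I_J,
    (exists (C : R) (N0 : nat), forall i : nat, (N0 <= i)%N ->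
        norm2 (P *m theta i j) <= C / Num.sqrt (i%:R))
    /\ (forall i : nat, Q *m theta i j = Q *m theta 0%N j)
    /\ (forall i : nat, N *m theta i j = N *m theta 0%N j).

Proof.
move=> hrank hS hJ hrh hWu hW heig hP hQ hK hspan WP WQ WN P Q N theta j.
pose A (k : 'I_n) i j := coord H y W k (eki H Sigma y v0 i) j.
have hA : forall k i j, A k i.+1 j = A k i j / (1 + var (A k i)).
  move=> k i j'; have [dl he] := heig i k.
  rewrite /A /eki iterS; exact: (key y hS hW he j').
have hth : forall k i, ((col k W)^T *m theta i j) 0 0 = A k i j by [].
have hvar0 : forall k dl, Cm H v0 *m col k W = dl *: (Sigma *m col k W) ->
    var (A k 0%N) = dl.
  by move=> k dl he; rewrite (eig_var y hW he).
have hz : forall k, var (A k 0%N) = 0 -> forall i, A k i j = A k 0%N j.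
  by move=> k h0 i; apply: seq_zero.
have hvN : forall k : 'I_n, (h <= k)%N -> var (A k 0%N) = 0.
  move=> k hk; apply: (hvar0 k 0); rewrite scale0r.
  have hw : (col k W)^T *m H = 0.
    move: hK => /andP [/sub_kermxP hK1 _].
    have := congr1 (row k) hK1; rewrite row_mul row0 -tr_col.
    have -> : col k (mask_cols W (fun k : 'I_n => (h <= k)%N)) = col k W.
      by apply/matrixP => a b; rewrite !mxE hk.
    by [].
  rewrite /Cm -mulmxA.
  have -> : H^T *m col k W = ((col k W)^T *m H)^T by rewrite trmx_mul trmxK.
  by rewrite hw trmx0 mulmx0.
have hvQ : forall k : 'I_n, (r <= k)%N -> (k < h)%N -> var (A k 0%N) = 0.
  move=> k hk1 hk2; apply: (hvar0 k 0); rewrite scale0r.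
  exact: (hQ k hk1 hk2).2.
have hvP : forall k : 'I_n, (k < r)%N -> 0 < var (A k 0%N).
  move=> k hk; have [_ [dl hdl he]] := hP k hk.
  by rewrite (hvar0 k dl he).
split; last split.
- pose G := \sum_(k < n) Num.sqrt (A k 0%N j ^+ 2 / (2 * var (A k 0%N))).
  pose S := Num.sqrt (\sum_a (\sum_b `|(Sigma *m WP) a b|) ^+ 2).
  exists (G * S), 1%N => i hi.
  have hG : 0 <= G by apply: sumr_ge0 => k _; apply: sqrtr_ge0.
  have hsi : 0 < Num.sqrt (i%:R : R) by rewrite sqrtr_gt0 ltr0n.
  have hb : forall b, `|(WP^T *m theta i j) b 0| <= G / Num.sqrt i%:R.
    move=> b; rewrite mask_mul mxE.
    case: ifP => hbr; last by rewrite normr0 divr_ge0 // sqrtr_ge0.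
    have -> : ((col b W)^T *m theta i j) 0 0 = A b i j by [].
    rewrite ler_pdivlMr //.
    apply: (@le_trans _ _ (Num.sqrt (A b 0%N j ^+ 2 / (2 * var (A b 0%N))))).
      rewrite -sqrtr_sqr -sqrtrM ?sqr_ge0 // ler_sqrt; last first.
        by rewrite divr_ge0 ?sqr_ge0 // mulr_ge0 // var_ge0.
      exact: (seq_pos (hA b) (hvP b hbr) i j).
    rewrite /G (bigD1 b) //= lerDl.
    by apply: sumr_ge0 => k _; apply: sqrtr_ge0.
  have := norm_bound (Sigma *m WP) hb.
  rewrite ger0_norm ?divr_ge0 ?sqrtr_ge0 // /P -mulmxA -/S.
  by rewrite mulrAC -!mulmxA.
- move=> i; rewrite /Q -!mulmxA; congr (_ *m (_ *m _)).
  rewrite !mask_mul; apply/matrixP => a b; rewrite !mxE.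
  case: ifP => // /andP [h1 h2].
  by move: (hz a (hvQ a h1 h2) i); rewrite /A /coord !mxE.
- move=> i; rewrite /N -!mulmxA; congr (_ *m (_ *m _)).
  rewrite !mask_mul; apply/matrixP => a b; rewrite !mxE.
  case: ifP => // h1.
  by move: (hz a (hvN a h1) i); rewrite /A /coord !mxE.
Qed.
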